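(* Let $\mu>0$, $\sigma\ge0$, and let $\mathbb{F}^{=}_{\mu,\sigma}$ be the class of distributions of nonnegative random variables with mean $\mu$ and standard deviation exactly $\sigma$. Then for every probability distribution $A$ over nonnegative prices, \[\sup_{F\in\mathbb{F}_{\mu,\sigma}}\frac{\mathrm{OPT}(F)}{\mathrm{REV}(A;F)}=\sup_{F\in\mathbb{F}^{=}_{\mu,\sigma}}\frac{\mathrm{OPT}(F)}{\mathrm{REV}(A;F)},\] and consequently \[\inf_A\sup_{F\in\mathbb{F}_{\mu,\sigma}}\frac{\mathrm{OPT}(F)}{\mathrm{REV}(A;F)}=\inf_A\sup_{F\in\mathbb{F}^{=}_{\mu,\sigma}}\frac{\mathrm{OPT}(F)}{\mathrm{REV}(A;F)}.\]
   Context: A nonnegative real random variable is $(\mu,\sigma)$-distributed if its expectation is $\mu$ and its standard deviation is at most $\sigma$; $\mathbb{F}_{\mu,\sigma}$ is the class of such distributions. Single item, single buyer with value $X\sim F$; a (possibly randomized) truthful mechanism is identified with a distribution $A$ over prices $p\ge0$. $\mathrm{REV}(p;F)=p\Pr[X\ge p]$, $\mathrm{REV}(A;F)=\mathbb{E}_{p\sim A}[\mathrm{REV}(p;F)]$, $\mathrm{OPT}(F)=\sup_{p\ge0}\mathrm{REV}(p;F)$. Ratios with zero denominator are interpreted as $+\infty$. *)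

(* Defs.v *)
From mathcomp Require Import all_boot all_order all_algebra.
From mathcomp Require Import all_classical all_reals all_analysis.
Set Implicit Arguments. Unset Strict Implicit. Unset Printing Implicit Defensive.
Import Order.TTheory GRing.Theory Num.Theory.
Local Open Scope classical_set_scope.
Local Open Scope ring_scope.
Local Open Scope ereal_scope.

Notation rdist R := (probability (measurableTypeR R) R).

Section Defs.
Variable R : realType.

Definition nonneg_dist (F : rdist R) : Prop := F [set x : R | (x < 0)%R] = 0.

Definition has_mean (F : rdist R) (mu : R) : Prop :=
  \int[F]_x (x%:E) = mu%:E.

Definition var_about (F : rdist R) (mu : R) : \bar R :=
  \int[F]_x (((x - mu) ^+ 2)%R%:E).

Definition F_le (mu sigma : R) : set (rdist R) :=
  [set F | nonneg_dist F /\ has_mean F mu /\ var_about F mu <= (sigma ^+ 2)%:E].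

Definition F_eq (mu sigma : R) : set (rdist R) :=
  [set F | nonneg_dist F /\ has_mean F mu /\ var_about F mu = (sigma ^+ 2)%:E].

Definition REVp (p : R) (F : rdist R) : \bar R :=
  p%:E * F [set x : R | (p <= x)%R].

Definition REV (A : rdist R) (F : rdist R) : \bar R :=
  \int[A]_p REVp p F.

Definition OPT (F : rdist R) : \bar R :=
  ereal_sup [set REVp p F | p in [set p : R | (0 <= p)%R]].

Definition ratio (a b : \bar R) : \bar R := if b == 0 then +oo else a * b^-1.

Definition worst_ratio (C : set (rdist R)) (A : rdist R) : \bar R :=
  ereal_sup [set ratio (OPT F) (REV A F) | F in C].

Definition minimax_ratio (C : set (rdist R)) : \bar R :=
  ereal_inf [set worst_ratio C A | A in [set A : rdist R | nonneg_dist A]].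

End Defs.

(* Main.v *)
From Pilot Require Import Defs.
From mathcomp Require Import all_boot all_order all_algebra.
From mathcomp Require Import all_classical all_reals all_analysis.
From mathcomp Require Import measurable_realfun.
From mathcomp Require Import ring lra.
Import Order.TTheory GRing.Theory Num.Theory.
Set Implicit Arguments. Unset Strict Implicit. Unset Printing Implicit Defensive.
Local Open Scope classical_set_scope.
Local Open Scope ring_scope.
Local Notation ratio := Pilot.Defs.ratio.

Section Aux.
Variable R : realType.
Local Notation T := (measurableTypeR R).
Local Open Scope ereal_scope.

Definition D0 : set T := [set x : T | (0 <= x)%R].

Lemma mD0 : measurable D0.
Proof.
have -> : D0 = [set` `[0%R, +oo[%R] by apply/seteqP; split => x /=; rewrite in_itv/= andbT.
exact: measurable_itv.
Qed.

Lemma mge (p : R) : measurable [set x : T | (p <= x)%R].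
Proof.
have -> : [set x : T | (p <= x)%R] = [set` `[p, +oo[%R] by apply/seteqP; split => x /=; rewrite in_itv/= andbT.
exact: measurable_itv.
Qed.

Lemma mlt0 : measurable [set x : T | (x < 0)%R].
Proof.
have -> : [set x : T | (x < 0)%R] = [set` `]-oo, 0%R[%R] by apply/seteqP; split => x /=; rewrite in_itv/=.
exact: measurable_itv.
Qed.

Lemma int_D0 (P : rdist R) (f : T -> \bar R) : nonneg_dist P ->
  measurable_fun [set: T] f ->
  \int[P]_x f x = \int[P]_(x in D0) f x.
Proof.
move=> P0 mf; rewrite [RHS]integral_mkcond.
apply: ae_eq_integral => //.
  by apply/(measurable_restrictT _ _).1 => //; [exact: mD0| exact: measurable_funS mf].
exists [set x : T | (x < 0)%R]; split; first exact: mlt0.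
  exact: P0.
move=> x /= H; rewrite ltNge; apply/negP => x0; apply: H => _.
by rewrite patchE mem_set.
Qed.

Lemma REVp_fin (p : R) (G : rdist R) : REVp p G = (p * fine (G [set x : T | (p <= x)%R]))%:E.
Proof. by rewrite /REVp EFinM fineK// fin_num_measure//; exact: mge. Qed.

Lemma mREV (G : rdist R) : measurable_fun setT (fun p : T => REVp p G).
Proof.
under eq_fun do rewrite REVp_fin.
apply/measurable_EFinP; apply: measurable_funM; first exact: measurable_id.
apply: nonincreasing_measurable => // p q pq.
apply: fine_le; rewrite ?fin_num_measure//; try exact: mge.
apply: le_measure; rewrite ?inE; try exact: mge.
by move=> x /= qx; exact: le_trans qx.
Qed.

End Aux.
Section Mix.
Variable R : realType.
Local Notation T := (measurableTypeR R).
Local Open Scope ereal_scope.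
Variables (F : rdist R) (a b c : {nonneg R}) (y : R).

Definition M (n : nat) : {measure set T -> \bar R} :=
  match n with 0%N => mscale a F | 1%N => mscale b (@dirac _ T 0%R R) | _ => mscale c (@dirac _ T y R) end.
Definition G : rdist R := mnormalize (msum M 3) F.

Lemma msumE U : msum M 3 U = a%:num%:E * F U + b%:num%:E * \d_(0%R : T) U + c%:num%:E * \d_(y : T) U.
Proof. by rewrite /msum !big_ord_recr big_ord0 /= add0e. Qed.

Hypothesis habc : (a%:num + b%:num + c%:num = 1)%R.

Lemma h1 : msum M 3 [set: T] = 1.
Proof. by rewrite msumE probability_setT !diracT !mule1 -!EFinD habc. Qed.

Lemma mnE U : mnormalize (msum M 3) F U = msum M 3 U.
Proof.
have h1' : (msum M 3 : {measure set T -> \bar R}) setT = 1 := h1.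
by rewrite /mnormalize h1' eqe oner_eq0 /= invr1 mule1. Qed.

Lemma Gfun : (G : set T -> \bar R) = msum M 3.
Proof. apply/funext => U; exact: mnE. Qed.

Lemma GE U : G U = a%:num%:E * F U + b%:num%:E * \d_(0%R : T) U + c%:num%:E * \d_(y : T) U.
Proof. by rewrite Gfun msumE. Qed.

Lemma G_int (D : set T) (f : T -> \bar R) : measurable D -> measurable_fun D f ->
  (forall x, D x -> 0 <= f x) ->
  \int[G]_(x in D) f x = a%:num%:E * \int[F]_(x in D) f x
     + b%:num%:E * (\d_(0%R : T) D * f 0%R) + c%:num%:E * (\d_(y : T) D * f y).
Proof.
move=> mD mf f0; rewrite Gfun ge0_integral_measure_sum// !big_ord_recr big_ord0 /= add0e.
by rewrite !ge0_integral_mscale// !integral_dirac.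
Qed.

End Mix.
Section Construct.
Variable R : realType.
Local Notation T := (measurableTypeR R).
Local Notation D0 := (@D0 R).
Local Open Scope ereal_scope.

Lemma var_fin (F : rdist R) (mu sigma : R) : F_le mu sigma F ->
  exists v : R, var_about F mu = v%:E /\ (0 <= v)%R /\ (v <= sigma ^+ 2)%R.
Proof.
move=> [_ [_ hv]].
have v0 : 0 <= var_about F mu by apply: integral_ge0 => x _; rewrite lee_fin sqr_ge0.
have vf : var_about F mu \is a fin_num.
  by rewrite ge0_fin_numE// (le_lt_trans hv)// ltry.
exists (fine (var_about F mu)); rewrite fineK//; split => //.
by split; [rewrite -lee_fin fineK | rewrite -lee_fin fineK].
Qed.

Lemma construct (mu sigma : R) (F : rdist R) (eps : R) :
  (0 < mu)%R -> F_le mu sigma F -> (0 < eps)%R -> (eps < 1)%R ->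
  exists G : rdist R, F_eq mu sigma G /\
    (forall p : R, (0 <= p)%R -> (1 - eps)%:E * REVp p F <= REVp p G) /\
    (forall A : rdist R, nonneg_dist A -> REV A G <= (1 - eps)%:E * REV A F + (eps * mu)%:E).
Proof.
move=> mu0 hF e0 e1.
have [v [hv [v0 vs]]] := var_fin hF.
pose t := ((sigma ^+ 2 - (1 - eps) * v) / (eps * mu ^+ 2))%R.
have t0 : (0 <= t)%R.
  apply: divr_ge0; last by apply: mulr_ge0; [exact: ltW| exact: sqr_ge0].
  rewrite subr_ge0 (le_trans _ vs)// ler_piMl// lerBlDr lerDl ltW//.
have ha : (0 <= 1 - eps)%R by rewrite subr_ge0 ltW.
have hb : (0 <= eps * t / (1 + t))%R by apply: divr_ge0; [apply: mulr_ge0 => //; exact: ltW | apply: addr_ge0].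
have hc : (0 <= eps / (1 + t))%R by apply: divr_ge0; [exact: ltW | apply: addr_ge0].
pose a := NngNum ha; pose b := NngNum hb; pose c := NngNum hc.
pose y := (mu * (1 + t))%R.
have t1 : (1 + t != 0)%R by rewrite gt_eqF //; lra.
have habc : (a%:num + b%:num + c%:num = 1)%R.
  rewrite /=; field => //.
have y0 : (0 <= y)%R by apply: mulr_ge0; [exact: ltW | apply: addr_ge0].
have cy : (c%:num * y = eps * mu)%R by rewrite /= /y mulrCA -mulrA mulVf ?mulr1// mulrC.
have [hF0 [hFm hFv]] := hF.
have G0 : nonneg_dist (G F a b c y).
  rewrite /nonneg_dist GE// hF0 mule0 add0e.
  rewrite !diracE !memNset /= ?ltxx ?mule0 ?adde0//.
  by rewrite ltNge y0.
have mx : measurable_fun [set: T] (fun x : T => (x : R)%:E).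
  by apply/measurable_EFinP; exact: measurable_id.
exists (G F a b c y); split; [split; [|split]|split].
- exact: G0.
- rewrite /has_mean (int_D0 G0 mx) G_int//; last exact: mD0.
  rewrite -(int_D0 hF0 mx) hFm !diracE !mem_set /D0 //= mul1e mule0 adde0 mul1e.
  rewrite -!EFinM -EFinD cy /=; congr EFin; ring.
- have hv' := hv; rewrite /var_about in hv'.
  have mf : measurable_fun [set: T] (fun x : T => ((x - mu) ^+ 2)%:E).
    apply/measurable_EFinP; apply: measurable_funX; apply: measurable_funB => //.
  have f0 : forall x : T, [set: T] x -> 0%R <= ((x - mu) ^+ 2)%:E.
    by move=> x _; rewrite lee_fin sqr_ge0.
  rewrite /var_about G_int//.
  set I := (X in (_ * X + _ + _ = _)).
  have -> : I = v%:E by exact: hv.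
  rewrite !diracT !mul1e -!EFinM -!EFinD; congr EFin.
  have ht : (eps * mu ^+ 2 * t = sigma ^+ 2 - (1 - eps) * v)%R.
    by rewrite /t; field; rewrite (gt_eqF mu0) (gt_eqF e0).
  have -> : (sigma ^+ 2 = (1 - eps) * v + eps * mu ^+ 2 * t)%R by rewrite ht; ring.
  rewrite /= /y; field => //.
- move=> p p0; rewrite /REVp GE// muleCA; apply: lee_wpmul2l; first by rewrite lee_fin.
  rewrite -addeA; apply: leeDl; apply: adde_ge0; apply: mule_ge0 => //; rewrite lee_fin //.
- move=> A A0.
  have key : forall p : R, (0 <= p)%R ->
      REVp p (G F a b c y) <= (1 - eps)%:E * REVp p F + (eps * mu)%:E.
    move=> p p0; rewrite /REVp GE//.
    set S := [set x : T | (p <= x)%R].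
    have mS : measurable S := mge p.
    have fF : F S \is a fin_num by apply: fin_num_measure.
    rewrite -(fineK fF) !diracE -!EFinM -!EFinD lee_fin -cy /=.
    have f0 : (0 <= fine (F S))%R by apply: fine_ge0; apply: measure_ge0.
    have [h|h] := boolP ((0%R : T) \in S).
      move/set_mem: h => /= h; have -> : p = 0%R by apply/le_anti/andP.
      by rewrite !mul0r mulr0 add0r; apply: mulr_ge0 => //; exact: hc.
    have -> : (false%:R : R) = 0%R by [].
    rewrite mulr0 addr0.
    have [h'|h'] := boolP ((y : T) \in S).
      move/set_mem: h' => /= h'; rewrite mulr1.
      rewrite mulrDr [(p * (_ * _))%R]mulrCA lerD2l (@mulrC R p) ler_wpM2l//; exact: hc.
    have -> : (false%:R : R) = 0%R by [].
    rewrite mulr0 addr0 mulrCA lerDl; apply: mulr_ge0 => //; exact: hc.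
  rewrite /REV (int_D0 A0 (mREV _)) (int_D0 A0 (mREV F)).
  have REV0 : forall (H : rdist R) (p : T), D0 p -> 0 <= REVp p H.
    by move=> H p p0; apply: mule_ge0; [rewrite lee_fin | exact: measure_ge0].
  have mRG : measurable_fun D0 (fun p : T => REVp p (G F a b c y)).
    exact: measurable_funS measurableT (@subsetT _ _) (mREV _).
  have mRF : measurable_fun D0 (fun p : T => REVp p F).
    exact: measurable_funS measurableT (@subsetT _ _) (mREV _).
  have mRF' : measurable_fun D0 (fun p : T => (1 - eps)%:E * REVp p F).
    exact: measurable_funeM.
  have e0' : 0 <= (1 - eps)%:E by rewrite lee_fin.
  apply: (@le_trans _ _ (\int[A]_(p in D0) ((1 - eps)%:E * REVp p F + (eps * mu)%:E))).
    apply: ge0_le_integral => //.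
    - exact: mD0.
    - by move=> p hp; exact: REV0.
    - exact: (emeasurable_funD mRF' (measurable_cst _)).
  rewrite ge0_integralD //; first last.
  - by move=> p _; rewrite lee_fin; apply: mulr_ge0; apply: ltW.
  - by move=> p hp; apply: mule_ge0 => //; exact: REV0.
  - exact: mD0.
  rewrite ge0_integralZl //; last 2 first.
  - exact: mD0.
  - by move=> p hp; exact: REV0.
  apply: leeD2l.
  rewrite integral_cst; last exact: mD0.
  rewrite -[leRHS]mule1; apply: lee_wpmul2l.
    by rewrite lee_fin; apply: mulr_ge0; apply: ltW.
  apply: probability_le1; exact: mD0.
Qed.

End Construct.
Section Helpers.
Variable R : realType.
Local Notation T := (measurableTypeR R).
Local Notation D0 := (@D0 R).
Local Open Scope ereal_scope.

Lemma le_by_reals (x y : \bar R) : (forall r : R, r%:E < x -> r%:E <= y) -> x <= y.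
Proof.
case: x => [x| |] h; last exact: leNye.
- case: y h => [y| |] h; last 2 first.
  + exact: leey.
  + by have := h (x - 1)%R; rewrite lte_fin ltrBlDr ltrDl ltr01 leeNy_eq => /(_ isT).
  rewrite leNgt; apply/negP => yx.
  have := h ((x + y) / 2)%R; rewrite !lte_fin lee_fin in yx *.
  move=> H; have : ((x + y) / 2 <= y)%R by apply: H; lra.
  lra.
- case: y h => [y| |] h; last 2 first.
  + exact: leey.
  + by have := h 0%R; rewrite ltry => /(_ isT).
  by have := h (y + 1)%R (ltry _); rewrite lee_fin => H; exfalso; lra.
Qed.

Lemma ratio_ge0 (a b : \bar R) : 0 <= a -> 0 <= b -> 0 <= ratio a b.
Proof.
move=> a0 b0; rewrite /ratio; case: ifP => // _.
by apply: mule_ge0 => //; rewrite inve_ge0.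
Qed.

Lemma OPT_ge0 (G : rdist R) : 0 <= OPT G.
Proof.
apply: (@le_trans _ _ (REVp 0 G)); first by rewrite /REVp mul0e.
by apply: ereal_sup_ubound; exists 0%R => /=.
Qed.

Lemma REV_ge0 (A G : rdist R) : nonneg_dist A -> 0 <= REV A G.
Proof.
move=> A0; rewrite /REV (int_D0 A0 (mREV _)); apply: integral_ge0 => p p0.
by apply: mule_ge0; [rewrite lee_fin | exact: measure_ge0].
Qed.

Lemma mean_pos (F : rdist R) (mu : R) : (0 < mu)%R -> nonneg_dist F -> has_mean F mu ->
  0 < F [set x : T | (mu / 2 <= x)%R].
Proof.
move=> mu0 hF0 hFm; rewrite lt0e measure_ge0 andbT; apply/eqP => h0.
have mx : measurable_fun [set: T] (fun x : T => (x : R)%:E).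
  by apply/measurable_EFinP; exact: measurable_id.
have : mu%:E <= (mu / 2)%:E.
  rewrite -hFm (int_D0 hF0 mx).
  apply: (@le_trans _ _ (\int[F]_(x in D0) (cst (mu / 2)%:E) x)).
    apply: ae_ge0_le_integral.
    - exact: mD0.
    - by move=> x; rewrite /D0 /= lee_fin.
    - exact: measurable_funS mx.
    - by move=> x _; rewrite lee_fin; apply: divr_ge0; [exact: ltW|].
    - exact: measurable_cst.
    exists [set x : T | (mu / 2 <= x)%R]; split; first exact: mge.
      exact: h0.
    move=> x /= H; rewrite leNgt; apply/negP => xm; apply: H => _.
    by rewrite lee_fin ltW.
  rewrite integral_cst; last exact: mD0.
  rewrite -[leRHS]mule1; apply: lee_wpmul2l.
    by rewrite lee_fin; apply: divr_ge0; [exact: ltW|].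
  apply: probability_le1; exact: mD0.
rewrite lee_fin; lra.
Qed.

End Helpers.
Section Main.
Variable R : realType.
Local Notation T := (measurableTypeR R).
Local Open Scope ereal_scope.

Lemma worst_le (mu sigma : R) (A : rdist R) : (0 < mu)%R -> nonneg_dist A ->
  worst_ratio (F_le mu sigma) A <= worst_ratio (F_eq mu sigma) A.
Proof.
move=> hmu A0.
apply: ge_ereal_sup => _ [F hF <-].
apply: le_by_reals => r hr.
suff [G [hG hrG]] : exists G, F_eq mu sigma G /\ r%:E <= ratio (OPT G) (REV A G).
  by apply: le_trans hrG _; apply: ereal_sup_ubound; exists G.
have [r0|r0] := leP r 0%R.
  have [G [hG _]] := @construct R mu sigma F (1 / 2)%R hmu hF ltac:(lra) ltac:(lra).
  exists G; split => //; apply: le_trans (ratio_ge0 (OPT_ge0 G) (REV_ge0 G A0)).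
  by rewrite lee_fin.
have RF0 := REV_ge0 F A0.
have [v [p [a0 [hv [v0 [p0 [hp ra]]]]]]] : exists v p a0 : R, REV A F = v%:E /\ (0 <= v)%R /\
    (0 <= p)%R /\ REVp p F = a0%:E /\ (r * v < a0)%R.
  move: hr RF0; rewrite /ratio; case: (REV A F) => [v| |] hr RF0.
  - exists v; have v0 : (0 <= v)%R by rewrite -lee_fin.
    move: hr; rewrite eqe; case: eqP => [v00 _|vn0 hr].
      have [hF0 [hFm _]] := hF.
      have Fp := mean_pos hmu hF0 hFm.
      exists (mu / 2)%R; exists (mu / 2 * fine (F [set x : T | (mu / 2 <= x)%R]))%R.
      split => //; split => //; split; first by apply: divr_ge0; [exact: ltW|].
      split; first exact: REVp_fin.
      rewrite v00 mulr0; apply: mulr_gt0; first by apply: divr_gt0.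
      apply: fine_gt0; rewrite Fp /= (le_lt_trans (probability_le1 _ _)) ?ltry//; exact: mge.
    have vn0' : (v != 0)%R by apply/eqP.
    rewrite inver (negbTE vn0') in hr.
    have vp : (0 < v)%R by rewrite lt_neqAle eq_sym v0 andbT; apply/eqP.
    have rvO : (r * v)%:E < OPT F.
      rewrite ltNge; apply/negP => H.
      have := lee_wpmul2r (x := (v^-1)%:E) _ H.
      rewrite lee_fin invr_ge0 v0 -EFinM mulrK ?unitfE// => /(_ isT) H2.
      by move: hr; rewrite ltNge H2.
    have [_ [q q0 <-] hq] := ereal_sup_gt rvO.
    exists q, (q * fine (F [set x : T | (q <= x)%R]))%R; split => //; split => //; split => //.
    split; first exact: REVp_fin.
    by rewrite -lte_fin -REVp_fin.
  - by move: hr => /=; rewrite invey mule0 lte_fin ltNge (ltW r0).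
  - by move: RF0; rewrite leeNy_eq.
pose D := (a0 - r * v)%R.
have D0 : (0 < D)%R by rewrite /D; lra.
have rmu : (0 < r * mu)%R by apply: mulr_gt0.
pose eps := (D / (D + r * mu))%R.
have e0 : (0 < eps)%R by apply: divr_gt0 => //; lra.
have e1 : (eps < 1)%R by rewrite /eps ltr_pdivrMr; lra.
have [G [hG [hOPT hREV]]] := @construct R mu sigma F eps hmu hF e0 e1.
exists G; split => //.
have Dn0 : (D + r * mu != 0)%R by rewrite gt_eqF //; lra.
have key : ((1 - eps) * a0 = r * ((1 - eps) * v + eps * mu))%R.
  by rewrite /eps /D; field.
have hO : ((1 - eps) * a0)%:E <= OPT G.
  apply: (@le_trans _ _ ((1 - eps)%:E * REVp p F)); first by rewrite hp -EFinM.
  apply: (le_trans (hOPT p p0)).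
  by apply: ereal_sup_ubound; exists p.
have hR := hREV A A0; rewrite hv -EFinM -EFinD in hR.
have RG0 := REV_ge0 G A0.
rewrite /ratio; case: ifPn => [_|g0]; first exact: leey.
move: hR RG0 g0; case: (REV A G) => [g| |] hR RG0 g0; last 2 first.
- by move: hR; rewrite leye_eq.
- by move: RG0; rewrite leeNy_eq.
have gn0 : (g != 0)%R by move: g0; rewrite eqe.
have gp : (0 < g)%R by rewrite lt_neqAle eq_sym gn0 -lee_fin.
rewrite inver (negbTE gn0).
have ig : 0 <= (g^-1)%:E by rewrite lee_fin invr_ge0 ltW.
apply: le_trans (lee_wpmul2r ig hO).
rewrite -EFinM lee_fin ler_pdivlMr // key; apply: ler_wpM2l; first exact: ltW.
by rewrite -lee_fin.
Qed.

End Main.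

Unset Implicit Arguments.

Theorem lemma5 (R : realType) (mu sigma : R) (hmu : 0 < mu) (hsigma : 0 <= sigma) :
  (forall A : rdist R, nonneg_dist A ->
     worst_ratio (F_le mu sigma) A = worst_ratio (F_eq mu sigma) A) /\
  minimax_ratio (F_le mu sigma) = minimax_ratio (F_eq mu sigma).
Proof.
have hw : forall A : rdist R, nonneg_dist A ->
    worst_ratio (F_le mu sigma) A = worst_ratio (F_eq mu sigma) A.
  move=> A A0; apply/le_anti/andP; split; first exact: worst_le.
  apply: le_ereal_sup => _ [F hF <-]; exists F => //.
  case: hF => h1 [h2 h3]; split => //; split => //; by rewrite h3 lexx.
split; first exact: hw.
rewrite /minimax_ratio; congr ereal_inf; apply/seteqP; split => _ [A A0 <-];
  by exists A => //; rewrite hw.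
Qed.
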